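(* Let $\mathcal{A}=\{\mathbf{A},\mathbf{B},\mathbf{C},\mathbf{D}\}$, let $n\ge 1$, and let $H$ be an arbitrary (simple) graph on the vertex set $\{1,\dots,n\}$. (a) Let $\mathcal{R}\subseteq\mathcal{A}\times\mathcal{A}$ be any relation satisfying: (i) $(x,y)\in\mathcal{R}\iff(y,x)\in\mathcal{R}$; (ii) $(x,y)\in\mathcal{R}\Rightarrow x\neq y$; (iii) for all $x\neq z$, if $(x,y)\in\mathcal{R}$ and $(y,z)\in\mathcal{R}$ then $(x,z)\notin\mathcal{R}$. Then every shape (with respect to $H$ and $\mathcal{R}$) is a bipartite graph. (b) Let $\mathcal{R}^\dagger$ be the symmetric relation whose related pairs are exactly $\{\mathbf{A},\mathbf{B}\}$, $\{\mathbf{B},\mathbf{D}\}$, $\{\mathbf{D},\mathbf{C}\}$ (i.e. $(x,y)\in\mathcal{R}^\dagger$ iff $\{x,y\}$ is one of these three sets). For every subset $M\subseteq\{1,\dots,n\}$ such that the graph $H'$ on $\{1,\dots,n\}$ with edge set $E_{H'}=\{\{i,j\}\in E_H: i,j\in M\}$ is bipartite, the graph $H'$ is a shape with respect to $H$ and $\mathcal{R}^\dagger$. (c) Let $\mathcal{H}$ be the following base graph on $\{1,\dots,n\}$: if $n$ is even, $\mathcal{H}$ has edges $\{\sigma(i),\sigma(i+1)\}$, $i=1,\dots,n$ (indices modulo $n$), for some permutation $\sigma$ of $\{1,\dots,n\}$ (a Hamiltonian cycle); if $n$ is odd, fix a vertex $u$ and a bijection $\sigma$ from $\{1,\dots,n-1\}$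 onto $\{1,\dots,n\}\setminus\{u\}$, and let $\mathcal{H}$ have edges $\{\sigma(i),\sigma(i+1)\}$, $i=1,\dots,n-1$ (indices modulo $n-1$), with $u$ isolated. Then every spanning subgraph $H'$ of $\mathcal{H}$ (vertex set $\{1,\dots,n\}$, edge set any subset of $E_{\mathcal{H}}$) is a shape with respect to $\mathcal{H}$ and $\mathcal{R}^\dagger$.
   Context: Sequences are elements $v=(x_1,\dots,x_n)\in\mathcal{A}^n$; the set $\mathcal{A}^n$ is viewed as the graph $Q_4^n$ in which two sequences are adjacent iff they differ in exactly one coordinate. Given a base graph $H$ on $\{1,\dots,n\}$ and a relation $\mathcal{R}\subseteq\mathcal{A}\times\mathcal{A}$, the shape of a sequence $v=(x_1,\dots,x_n)$ is the graph $H_{\mathcal{R}}(v)$ with vertex set $\{1,\dots,n\}$ and edge set $\{\{i,k\}\in E_H : (x_i,x_k)\in\mathcal{R}\}$. A graph $S$ on $\{1,\dots,n\}$ is called a shape (with respect to $H,\mathcal{R}$) if $S=H_{\mathcal{R}}(v)$ for some sequence $v\in\mathcal{A}^n$. *)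

(* Defs.v *)
From mathcomp Require Import all_boot all_fingroup.
Set Implicit Arguments. Unset Strict Implicit. Unset Printing Implicit Defensive.

Definition letter := 'I_4.
Definition lA : letter := @Ordinal 4 0 isT.
Definition lB : letter := @Ordinal 4 1 isT.
Definition lC : letter := @Ordinal 4 2 isT.
Definition lD : letter := @Ordinal 4 3 isT.

(* A (simple) graph on {1..n} is a symmetric irreflexive relation on 'I_n;
   a sequence in A^n is a map 'I_n -> letter. *)
Definition simple_graph n (G : rel 'I_n) := symmetric G /\ irreflexive G.

Definition shape n (H : rel 'I_n) (R : rel letter) (v : 'I_n -> letter) : rel 'I_n :=
  fun i k => H i k && R (v i) (v k).

Definition is_shape n (H : rel 'I_n) (R : rel letter) (S : rel 'I_n) :=
  exists v : 'I_n -> letter, S =2 shape H R v.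

Definition bipartite n (S : rel 'I_n) :=
  exists c : 'I_n -> bool, forall i j, S i j -> c i != c j.

Definition Rdag : rel letter := fun x y =>
  (x, y) \in [:: (lA, lB); (lB, lA); (lB, lD); (lD, lB); (lD, lC); (lC, lD)].

Definition cycle_graph m n (s : 'I_m -> 'I_n) : rel 'I_n := fun x y =>
  [exists i : 'I_m, ((x == s i) && (y == s (ordS i)))
                  || ((y == s i) && (x == s (ordS i)))].

Definition restrict n (H : rel 'I_n) (M : {set 'I_n}) : rel 'I_n :=
  fun i j => [&& H i j, i \in M & j \in M].

(* Main.v *)
Require Import Defs.
From mathcomp Require Import all_boot all_fingroup.
From mathcomp Require Import zify.
Set Implicit Arguments. Unset Strict Implicit. Unset Printing Implicit Defensive.

Lemma letterP (P : letter -> Prop) : P lA -> P lB -> P lC -> P lD -> forall x, P x.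
Proof.
move=> a b c d [m hm].
do 4 (case: m hm => [|m] hm; first by rewrite (bool_irrelevance hm isT)).
by [].
Qed.

Lemma color6 (b01 b02 b03 b12 b13 b23 : bool) :
 ~~ [&& b01, b12 & b02] -> ~~ [&& b01, b13 & b03] -> ~~ [&& b02, b23 & b03] -> ~~ [&& b12, b23 & b13] ->
 exists c : bool * bool * bool, [&& b01 ==> c.1.1, b02 ==> c.1.2, b03 ==> c.2, b12 ==> (c.1.1 != c.1.2), b13 ==> (c.1.1 != c.2) & b23 ==> (c.1.2 != c.2)].
Proof.
case: b01; case: b02; case: b03; case: b12; case: b13; case: b23 => //= _ _ _ _;
first [ by exists (true,true,true) | by exists (true,true,false) | by exists (true,false,true) | by exists (true,false,false)
 | by exists (false,true,true) | by exists (false,true,false) | by exists (false,false,true) | by exists (false,false,false)].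
Qed.
Lemma Rdag_sym : forall x y, Rdag x y = Rdag y x.
Proof. by apply: letterP; apply: letterP. Qed.

Definition step (x : letter) (b : bool) : letter :=
 if val x == 0 then (if b then lB else lC)
 else if val x == 1 then (if b then lD else lC)
 else if val x == 2 then (if b then lD else lC)
 else (if b then lC else lD).

Lemma step_ok : forall x b, Rdag x (step x b) = b.
Proof. by apply: letterP; case. Qed.
Lemma step_ge1 : forall x b, 1 <= val (step x b).
Proof. by apply: letterP; case. Qed.
Lemma step_ge2 : forall x b, 1 <= val x -> 2 <= val (step x b).
Proof. by apply: letterP; case. Qed.
Lemma Rdag_A : forall x, 2 <= val x -> Rdag x lA = false.
Proof. by apply: letterP. Qed.

Fixpoint qw (f : nat -> bool) (t : nat) : letter :=
  match t with 0 => lA | t'.+1 => step (qw f t') (f t') end.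

Lemma walk_nat m (e : nat -> bool) : 0 < m -> ~~ odd m -> (forall k, e k = e (k %% m)) ->
  (m = 2 -> e 0 = e 1) ->
  exists W : nat -> letter, (forall k, W (k + m) = W k) /\ forall k, Rdag (W k) (W k.+1) = e k.
Proof.
move=> hm ev pe e2.
have [/forallP hall | /forallPn [r hr]] := boolP [forall i : 'I_m, e i].
  exists (fun k => if odd k then lB else lA); split.
    by move=> k; rewrite oddD (negbTE ev) addbF.
  move=> k; rewrite pe; have := hall (Ordinal (ltn_pmod k hm)); rewrite /= => ->.
  by case: (odd k).
set c := m - r.+1.
exists (fun k => qw (fun t => e (t + r.+1)) ((k + c) %% m)); split.
  by move=> k; rewrite addnAC modnDr.
move=> k /=.
have key : e k = e ((k + c) %% m + r.+1).
  by rewrite (pe k) (pe (_ + _)) modnDml -addnA subnK ?modnDr.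
have Hs : (k.+1 + c) %% m = ((k + c) %% m).+1 %% m.
  by rewrite addSn -[in RHS]addn1 modnDml addn1.
rewrite Hs key.
have tm : (k + c) %% m < m := ltn_pmod _ hm.
move: tm; set t := (k + c) %% m => tm.
case: (ltngtP t.+1 m) => [lt|gt|eq].
- by rewrite modn_small //= step_ok.
- by exfalso; lia.
- rewrite eq modnn /=.
  have -> : e (t + r.+1) = false.
    by rewrite pe addnS -addSn eq modnDl modn_small // (negbTE hr).
  case: t tm eq => [|[|t]] tm eq.
  + by rewrite -eq in ev.
  + rewrite /= (pe r.+1).
    move: (nat_of_ord r) (ltn_ord r) hr => rr; rewrite -eq.
    case: rr => [|[|rr]] //= _ hr.
      by rewrite (_ : 1 %% 2 = 1) // -e2 // (negbTE hr).
    by rewrite (_ : 2 %% 2 = 0) // e2 // (negbTE hr).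
  + by rewrite /= Rdag_A //; apply: step_ge2; apply: step_ge1.
Qed.

Lemma periodic m (W : nat -> letter) : (forall k, W (k + m) = W k) -> forall k, W (k %% m) = W k.
Proof.
move=> pW k; rewrite {2}(divn_eq k m) addnC.
elim: (k %/ m) => [|q IH]; first by rewrite mul0n addn0.
by rewrite mulSn addnCA addnC pW.
Qed.

Lemma walk m (E : rel 'I_m) : symmetric E -> ~~ odd m ->
  exists w : 'I_m -> letter, forall i, Rdag (w i) (w (ordS i)) = E i (ordS i).
Proof.
case: m E => [|m] E sE ev; first by exists (fun _ => lA); case.
pose e k := E (inord (k %% m.+1)) (inord (k.+1 %% m.+1)).
have [W [pW hW]] : exists W : nat -> letter, (forall k, W (k + m.+1) = W k) /\ forall k, Rdag (W k) (W k.+1) = e k.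
  apply: walk_nat => //.
    by move=> k; rewrite /e modn_mod; have := modnDml k 1 m.+1; rewrite !addn1 => ->.
  by case=> m1; subst m; rewrite /e /= sE.
exists (fun i => W i) => i.
rewrite /= periodic // hW /e modn_small //.
by congr E; apply: val_inj; rewrite /= inordK // ltn_pmod.
Qed.

Lemma colorR (R : rel letter) : (forall x y, R x y = R y x) -> (forall x y, R x y -> x != y) ->
  (forall x y z, x != z -> R x y -> R y z -> ~~ R x z) ->
  exists f : letter -> bool, forall x y, R x y -> f x != f y.
Proof.
move=> sR iR tR.
have T1 : ~~ [&& R lA lB, R lB lC & R lA lC].
  by apply/and3P => -[h1 h2 h3]; move: (tR lA lB lC isT h1 h2); rewrite h3.
have T2 : ~~ [&& R lA lB, R lB lD & R lA lD].
  by apply/and3P => -[h1 h2 h3]; move: (tR lA lB lD isT h1 h2); rewrite h3.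
have T3 : ~~ [&& R lA lC, R lC lD & R lA lD].
  by apply/and3P => -[h1 h2 h3]; move: (tR lA lC lD isT h1 h2); rewrite h3.
have T4 : ~~ [&& R lB lC, R lC lD & R lB lD].
  by apply/and3P => -[h1 h2 h3]; move: (tR lB lC lD isT h1 h2); rewrite h3.
have [[[c1 c2] c3] /andP[h01 /andP[h02 /andP[h03 /andP[h12 /andP[h13 h23]]]]]] := color6 T1 T2 T3 T4.
exists (fun x => if val x == 0 then false else if val x == 1 then c1 else if val x == 2 then c2 else c3).
apply: letterP; apply: letterP => /=. all: try (by move=> h; move: (iR _ _ h); rewrite eqxx). simpl in h01, h02, h03, h12, h13, h23.
- by move=> h; have /= -> := implyP h01 h.
- by move=> h; have /= -> := implyP h02 h.
- by move=> h; have /= -> := implyP h03 h.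
- by rewrite sR => h; have /= -> := implyP h01 h.
- exact: (implyP h12).
- exact: (implyP h13).
- by rewrite sR => h; have /= -> := implyP h02 h.
- by rewrite sR eq_sym; exact: (implyP h12).
- exact: (implyP h23).
- by rewrite sR => h; have /= -> := implyP h03 h.
- by rewrite sR eq_sym; exact: (implyP h13).
- by rewrite sR eq_sym; exact: (implyP h23).
Qed.

Lemma cycle_shape n m (s : 'I_m -> 'I_n) (H' : rel 'I_n) : injective s -> ~~ odd m ->
  symmetric H' -> (forall i j, H' i j -> cycle_graph s i j) -> is_shape (cycle_graph s) Rdag H'.
Proof.
move=> inj ev sH hsub.
have [w hw] := @walk m (fun i j => H' (s i) (s j)) (fun i j => sH (s i) (s j)) ev.
have pick_s : forall i, [pick j | s j == s i] = Some i.
  move=> i; case: pickP => [j /eqP /inj -> // | /(_ i)]; by rewrite eqxx.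
exists (fun x => if [pick i | s i == x] is Some i then w i else lA).
move=> x y; rewrite /Defs.shape.
case cg: (cycle_graph s x y); last first.
  by rewrite andFb; apply/negbTE/negP => /hsub; rewrite cg.
move: cg => /existsP [i /orP [/andP [/eqP -> /eqP ->] | /andP [/eqP -> /eqP ->]]].
  by rewrite !pick_s /= hw.
by rewrite !pick_s /= sH Rdag_sym hw.
Qed.

Theorem lemma1 (n : nat) (hn : 0 < n) (H : rel 'I_n) (HH : simple_graph H) :
  (* (a) *)
  (forall R : rel letter,
     (forall x y, R x y = R y x) ->
     (forall x y, R x y -> x != y) ->
     (forall x y z, x != z -> R x y -> R y z -> ~~ R x z) ->
     forall S : rel 'I_n, is_shape H R S -> bipartite S)
  /\
  (* (b) *)
  (forall M : {set 'I_n}, bipartite (restrict H M) -> is_shape H Rdag (restrict H M))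
  /\
  (* (c) *)
  ((~~ odd n ->
    forall sigma : {perm 'I_n},
    forall H' : rel 'I_n, symmetric H' ->
      (forall i j, H' i j -> cycle_graph sigma i j) ->
      is_shape (cycle_graph sigma) Rdag H')
   /\
   (odd n ->
    forall (u : 'I_n) (sigma : 'I_n.-1 -> 'I_n),
      injective sigma -> (forall i, sigma i != u) ->
    forall H' : rel 'I_n, symmetric H' ->
      (forall i j, H' i j -> cycle_graph sigma i j) ->
      is_shape (cycle_graph sigma) Rdag H')).
Proof.
split.
  move=> R sR iR tR S [v hv].
  have [f hf] := colorR sR iR tR.
  exists (fun i => f (v i)) => i j; rewrite hv /Defs.shape => /andP [_ h].
  exact: hf.
split.
  move=> M [c hc].
  exists (fun i => if i \in M then (if c i then lA else lB) else lC) => i j.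
  rewrite /Defs.shape /restrict.
  case Hij: (H i j) => //=.
  case iM: (i \in M); case jM: (j \in M) => //=.
  - have := hc i j; rewrite /restrict Hij iM jM => /(_ isT).
    by case: (c i); case: (c j).
  - by case: (c i).
  - by case: (c j).
split.
  move=> ev sigma H' sH hsub.
  exact: (cycle_shape (@perm_inj _ sigma) ev sH hsub).
move=> hodd u sigma inj _ H' sH hsub.
apply: (cycle_shape inj _ sH hsub).
by move: hodd; case: (n) => // k /=.
Qed.
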